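(* Let $q$ be a prime with $q \ge 7$, and let \[ H_2(r,s) = r^2 + (6s^2 - 4s^3 - 4s)\,r + s^4 \in \mathbb F_q[r,s]. \] Then the set $\mathfrak P = \{(r,s) \in \mathbb F_q^2 : r \notin\{0,1\},\ s\notin\{0,1\},\ H_2(r,s)=0\}$ has exactly $q-5$ elements.
   Context: Geometric meaning (not needed for the statement): for $\alpha \in \mathbb F_q\setminus\{0,1\}$ let $C_\alpha$ be the nonsingular conic $\alpha xy + (1-\alpha)xz - yz = 0$, the members of the pencil through $[1,0,0],[0,1,0],[0,0,1],[1,1,1]$. By Cayley's criterion, the pair $(C_r,C_s)$ satisfies the Poncelet triangle condition exactly when $H_2(r,s)=0$, so $\mathfrak P$ is the set of such pairs in this pencil. *)

(* Defs.v *)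
From HB Require Import structures.
From mathcomp Require Import all_boot all_order all_algebra.
Set Implicit Arguments. Unset Strict Implicit. Unset Printing Implicit Defensive.
Import GRing.Theory.
Local Open Scope ring_scope.

Definition H2 {R : pzRingType} (r s : R) : R :=
  r ^+ 2 + (6%:R * s ^+ 2 - 4%:R * s ^+ 3 - 4%:R * s) * r + s ^+ 4.

Definition PonceletSet (q : nat) : {set 'F_q * 'F_q} :=
  [set rs : 'F_q * 'F_q | [&& rs.1 != 0, rs.1 != 1, rs.2 != 0, rs.2 != 1
                           & H2 rs.1 rs.2 == 0]].

(* Main.v *)
Require Import Defs.
From mathcomp Require Import all_boot all_order all_algebra.
From mathcomp Require Import ring.
Import GRing.Theory.

Local Open Scope ring_scope.
Ltac nz := rewrite ?(mulf_eq0, invr_eq0, expf_eq0, negb_or, negb_and) /=;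
  repeat match goal with H : is_true (~~ ?b) |- context[?b] => rewrite (negbTE H) end; try done.
Section S.
Variable F : fieldType.
Hypothesis h2 : (2%:R : F) != 0.
Hypothesis h3 : (3%:R : F) != 0.
Local Open Scope ring_scope.

Definition sf (z : F) : F := (2%:R * z - 1) / (z * (2%:R - z)).
Definition rf (z : F) : F := (2%:R * z - 1) ^+ 3 / (z * (2%:R - z) ^+ 3).
Definition zf (r s : F) : F := (r - s ^+ 2) / (2%:R * s ^+ 2 * (s - 1)).

Definition good (z : F) := [&& z != 0, z != 2%:R, z != 2%:R^-1, z != 1 & z != -1].

Lemma sub_neq0 (a b : F) : a != b -> a - b != 0.
Proof. by rewrite subr_eq0. Qed.

Lemma good_props z : good z ->
  [/\ z != 0, 2%:R - z != 0, 2%:R * z - 1 != 0, z - 1 != 0 & z + 1 != 0].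
Proof.
case/and5P => z0 z2 zh z1 zm.
split => //.
- by rewrite subr_eq0 eq_sym.
- apply/negP => /eqP h; move/eqP: zh; apply.
  have -> : z = (2%:R * z - 1 + 1) / 2%:R by field.
  by rewrite h add0r div1r.
- by rewrite subr_eq0.
- by rewrite -[1]opprK subr_eq0.
Qed.

Lemma image_in z : good z ->
  [&& rf z != 0, rf z != 1, sf z != 0, sf z != 1 & H2 (rf z) (sf z) == 0].
Proof.
move=> /good_props [z0 z2 zh z1 zm].
apply/and5P; split.
- by rewrite /rf; nz.
- have -> : rf z = 1 + (z - 1) * (z + 1) ^+ 3 / (z * (2%:R - z) ^+ 3).
    by rewrite /rf; field; nz.
  by rewrite -subr_eq0 addrC addKr; nz.
- by rewrite /sf; nz.
- have -> : sf z = 1 + (z - 1) * (z + 1) / (z * (2%:R - z)).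
    by rewrite /sf; field; nz.
  by rewrite -subr_eq0 addrC addKr; nz.
- apply/eqP; rewrite /H2 /rf /sf; field.
  by rewrite z0 z2.
Qed.

Lemma zf_rf z : good z -> zf (rf z) (sf z) = z.
Proof.
move=> /good_props [z0 z2 zh z1 zm].
rewrite /zf /rf /sf; field.
rewrite z0 z2 zh h2 /=.
have -> : 2%:R * z - 1 + -1 * (z * (2%:R - z)) = (z - 1) * (z + 1) by ring.
by rewrite andbT mulf_neq0.
Qed.

Lemma four_eq : (4%:R : F) = 2%:R * 2%:R.
Proof. by rewrite -natrM. Qed.

Lemma half_id (s : F) : s / 2%:R * (2%:R - 2%:R^-1) - (2%:R / 2%:R - 1) = s * 3%:R / 4%:R.
Proof. field. by rewrite four_eq mulf_neq0. Qed.

Lemma preimage r s : r != 0 -> r != 1 -> s != 0 -> s != 1 -> H2 r s = 0 ->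
  [/\ good (zf r s), rf (zf r s) = r & sf (zf r s) = s].
Proof.
move=> r0 r1 s0 s1 hH.
have s1' : s - 1 != 0 by rewrite subr_eq0.
have D0 : 2%:R * s ^+ 2 * (s - 1) != 0 by nz.
set z := zf r s.
have K0 : (2%:R * s ^+ 2 * (s - 1)) ^+ 2 * (s * z * (2%:R - z) - (2%:R * z - 1)) = - s * H2 r s.
  by rewrite /z /zf /H2; field; nz.
have K : s * z * (2%:R - z) = 2%:R * z - 1.
  apply/eqP; rewrite -subr_eq0; move: K0; rewrite hH mulr0 => /eqP.
  by rewrite mulf_eq0 expf_eq0 (negbTE D0) andbF.
have Hr : r = s ^+ 2 + z * (2%:R * s ^+ 2 * (s - 1)) by rewrite /z /zf; field; nz.
clearbody z.
have g : good z.
  apply/and5P; split; apply/negP => /eqP hz; move: K; rewrite hz => /eqP;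
    rewrite -subr_eq0.
  - rewrite (_ : _ - _ = 1); first by rewrite oner_eq0.
    ring.
  - rewrite (_ : _ - _ = - 3%:R); first by rewrite oppr_eq0 (negbTE h3).
    ring.
  - rewrite (_ : _ - _ = s * 3%:R / 4%:R).
      by rewrite !mulf_eq0 invr_eq0 (negbTE s0) (negbTE h3) /= four_eq mulf_eq0 (negbTE h2).
    exact: half_id.
  - rewrite (_ : _ - _ = s - 1); first by rewrite (negbTE s1').
    ring.
  - rewrite (_ : _ - _ = - 3%:R * (s - 1)).
      by rewrite mulf_eq0 oppr_eq0 (negbTE h3) (negbTE s1').
    ring.
have [z0 z2 zh z1 zm] := good_props _ g.
have Hs : sf z = s by rewrite /sf -K; field; nz.
split => //.
have -> : rf z = sf z ^+ 2 * (1 + 2%:R * z * (sf z - 1)).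
  by rewrite /rf /sf; field; nz.
by rewrite Hs Hr; ring.
Qed.

Lemma neq_by (a b c k : F) : k != 0 -> (a - b) * c = k -> a != b.
Proof. move=> hk e; apply/negP => /eqP ab; move: hk; by rewrite -e ab subrr mul0r eqxx. Qed.

Lemma uniq_bad : uniq [:: 0; 2%:R; 2%:R^-1; 1; -1 : F].
Proof.
have h1 : (1 : F) != 0 by exact: oner_neq0.
have hm1 : (-1 : F) != 0 by rewrite oppr_eq0.
have hm2 : (- 2%:R : F) != 0 by rewrite oppr_eq0.
have hm3 : (- 3%:R : F) != 0 by rewrite oppr_eq0.
have d0 : (0 : F) != 2%:R by apply: (@neq_by (0) (2%:R) (1) (- 2%:R) hm2); ring.
have d1 : (0 : F) != 2%:R^-1 by apply: (@neq_by (0) (2%:R^-1) (2%:R) (-1) hm1); field.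
have d2 : (0 : F) != 1 by apply: (@neq_by (0) (1) (1) (-1) hm1); ring.
have d3 : (0 : F) != -1 by apply: (@neq_by (0) (-1) (1) (1) h1); ring.
have d4 : (2%:R : F) != 2%:R^-1 by apply: (@neq_by (2%:R) (2%:R^-1) (2%:R) (3%:R) h3); field.
have d5 : (2%:R : F) != 1 by apply: (@neq_by (2%:R) (1) (1) (1) h1); ring.
have d6 : (2%:R : F) != -1 by apply: (@neq_by (2%:R) (-1) (1) (3%:R) h3); ring.
have d7 : (2%:R^-1 : F) != 1 by apply: (@neq_by (2%:R^-1) (1) (2%:R) (-1) hm1); field.
have d8 : (2%:R^-1 : F) != -1 by apply: (@neq_by (2%:R^-1) (-1) (2%:R) (3%:R) h3); field.
have d9 : (1 : F) != -1 by apply: (@neq_by (1) (-1) (1) (2%:R) h2); ring.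
by rewrite /= !inE !negb_or d0 d1 d2 d3 d4 d5 d6 d7 d8 d9.
Qed.

End S.
Arguments good {F}. Arguments rf {F}. Arguments sf {F}. Arguments zf {F}.
Local Close Scope ring_scope.


Theorem mainTheorem2 (q : nat) (hq : prime q) (hq7 : 7 <= q) :
  #|PonceletSet q| = q - 5.
Proof.
Local Open Scope ring_scope.

have ch := pchar_Fp hq.
have h2 : (2%:R : 'F_q) != 0.
  rewrite -(dvdn_pcharf ch); apply/negP => /(dvdn_leq (isT : (0 < 2)%N)).
  by move=> h; move: (leq_trans hq7 h).
have h3 : (3%:R : 'F_q) != 0.
  rewrite -(dvdn_pcharf ch); apply/negP => /(dvdn_leq (isT : (0 < 3)%N)).
  by move=> h; move: (leq_trans hq7 h).
have -> : PonceletSet q = [set (rf z, sf z) | z in [set z | good z]].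
  apply/setP => -[r s]; rewrite !inE /=; apply/idP/idP.
  - case/and5P => r0 r1 s0 s1 /eqP hH.
    have [g hr hs] := preimage _ h2 h3 _ _ r0 r1 s0 s1 hH.
    by apply/imsetP; exists (zf r s); rewrite ?inE // hr hs.
  - case/imsetP => z; rewrite inE => g [-> ->].
    exact: (image_in _ h2).
rewrite card_in_imset; last first.
  move=> z w; rewrite !inE => gz gw e.
  rewrite -(zf_rf _ h2 _ gz) -(zf_rf _ h2 _ gw).
  by congr zf; [exact: (f_equal fst e) | exact: (f_equal snd e)].
rewrite cardsCs card_Fp //.
have -> : ~: [set z : 'F_q | good z] = [set z | z \in [:: 0; 2%:R; 2%:R^-1; 1; -1]].
  by apply/setP => z; rewrite !inE /good !negb_and !negbK.
rewrite cardsE.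
by rewrite (card_uniqP (uniq_bad _ h2 h3)).
Qed.
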